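(* Let $k,r\geq 0$ be integers. Every $r$-shallow topological minor of a $k$-gap-cover-planar graph is $(2r+1)k$-gap-cover-planar.
   Context: All graphs are simple, finite and undirected. A drawing of a graph $G$ in the plane represents each vertex by a distinct point and each edge $vw$ by a non-self-intersecting curve between the points of $v$ and $w$, such that no three edges cross at a single point. Two distinct edges are independent if they share no endpoint. For a drawing $D$ of $G$, let $D^\times$ be the set of unordered pairs $\{e,f\}$ of independent edges that cross in $D$. A bearing of $D$ is a set $B$ of ordered pairs $(e,f)$ with $\{e,f\}\in D^\times$ such that for each $\{e,f\}\in D^\times$ at least one of $(e,f),(f,e)$ lies in $B$. For a bearing $B$, a $B$-cover of an edge $e$ is a set $C\subseteq V(G)$ such that every edge $f$ with $(e,f)\in B$ has an endpoint in $C$. A drawing $D$ is $k$-gap-cover-planar if there is a bearing $B$ of $D$ such that each edge $vw\in E(G)$ has a $B$-cover contained in $V(G)\setminus\{v,w\}$ of size at most $k$. A graph is $k$-gap-cover-planar if it has a $k$-gap-cover-planar drawing in the plane. A $(\leq c)$-subdivision of $H$ replaces each edge of $H$ by a path with at most $c$ new internal vertices; $H$ is an $r$-shallow topological minor of $G$ if some $(\leq 2r)$-subdivision of $H$ is a subgraph of $G$. *)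

(* Defs.v *)
From Stdlib Require Import Reals.
From Coquelicot Require Import Coquelicot.
From mathcomp Require Import all_boot.

Set Implicit Arguments.
Unset Strict Implicit.
Unset Printing Implicit Defensive.

Record sgraph := SGraph {
  gV : finType;
  gadj : rel gV;
  gsym : symmetric gadj;
  girr : irreflexive gadj }.

Definition is_edge (G : sgraph) (A : {set gV G}) : bool :=
  [exists u, exists v, gadj u v && (A == [set u; v])].

Definition point := (R * R)%type.

Definition in01 (t : R) : Prop := Rle R0 t /\ Rle t R1.
Definition in01o (t : R) : Prop := Rlt R0 t /\ Rlt t R1.

(* Raw drawing data: a point for each vertex, a parametrized curve for each
   (edge) vertex set.  The curve of an edge is its restriction to [0,1]. *)
Record drawing (G : sgraph) := Drawing {
  dpos : gV G -> point;
  dcurve : {set gV G} -> R -> point }.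

Definition is_drawing (G : sgraph) (D : drawing G) : Prop :=
  injective (dpos D) /\
  (forall A : {set gV G}, is_edge A ->
     (* continuous curve (any continuous path on [0,1] extends to R) *)
     (forall t, continuous (dcurve D A) t) /\
     (forall s t, in01 s -> in01 t -> dcurve D A s = dcurve D A t -> s = t) /\
     (exists u v, A = [set u; v] /\ dcurve D A R0 = dpos D u /\
                  dcurve D A R1 = dpos D v) /\
     (* standard convention: an edge meets no vertex other than its ends *)
     (forall t x, in01 t -> dcurve D A t = dpos D x -> x \in A)) /\
  (forall (A1 A2 A3 : {set gV G}) (p : point),
     is_edge A1 -> is_edge A2 -> is_edge A3 ->
     A1 <> A2 -> A1 <> A3 -> A2 <> A3 ->
     (exists t, in01o t /\ dcurve D A1 t = p) ->
     (exists t, in01o t /\ dcurve D A2 t = p) ->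
     (exists t, in01o t /\ dcurve D A3 t = p) -> False).

Definition crossing (G : sgraph) (D : drawing G) (e f : {set gV G}) : Prop :=
  is_edge e /\ is_edge f /\ [disjoint e & f] /\
  exists s t, in01 s /\ in01 t /\ dcurve D e s = dcurve D f t.

Definition bearing (G : sgraph) (D : drawing G)
    (B : {set gV G} -> {set gV G} -> Prop) : Prop :=
  (forall e f, B e f -> crossing D e f) /\
  (forall e f, crossing D e f -> B e f \/ B f e).

Definition gap_cover_drawing (k : nat) (G : sgraph) (D : drawing G) : Prop :=
  exists B, bearing D B /\
    forall e : {set gV G}, is_edge e ->
      exists C : {set gV G}, (#|C| <= k)%N /\ [disjoint C & e] /\
        forall f, B e f -> exists x, x \in f /\ x \in C.

Definition gap_cover_planar (k : nat) (G : sgraph) : Prop :=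
  exists D : drawing G, is_drawing D /\ gap_cover_drawing k D.

(* H is an r-shallow topological minor of G: some (<= 2r)-subdivision of H
   is a subgraph of G, i.e. the vertices of H map injectively (phi) to
   branch vertices of G and each edge uv of H maps to a path of G from
   phi u to phi v whose at most 2r internal vertices (P A) are new
   (not branch vertices) and not shared with the path of another edge. *)
Definition shallow_top_minor (r : nat) (H G : sgraph) : Prop :=
  exists (phi : gV H -> gV G) (P : {set gV H} -> seq (gV G)),
    injective phi /\
    (forall A : {set gV H}, is_edge A ->
       exists u v, A = [set u; v] /\
         path (@gadj G) (phi u) (rcons (P A) (phi v)) /\
         uniq (P A) /\ (size (P A) <= 2 * r)%N /\
         (forall x, x \in P A -> forall y, x != phi y)) /\
    (forall A A' : {set gV H}, is_edge A -> is_edge A' -> A <> A' ->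
       forall x, x \in P A -> x \notin P A').

(* Main.v *)
Require Import Defs.
From Stdlib Require Import Reals.
From Coquelicot Require Import Coquelicot.
From mathcomp Require Import all_boot.
From Stdlib Require Import Lra Classical IndefiniteDescription.

Local Open Scope R_scope.

Definition arc (c : R -> point) (a b : point) (I : point -> Prop) :=
 (forall t, continuous c t) /\ (forall s t, in01 s -> in01 t -> c s = c t -> s = t) /\
 c R0 = a /\ c R1 = b /\ (forall t, in01 t -> I (c t)).

Lemma cfst (c : R -> point) t : continuous c t -> continuity_pt (fun t => fst (c t)) t.
Proof.
move=> H; apply continuity_pt_filterlim.
change (continuous (fun t => fst (c t)) t).
apply: continuous_comp => //. case: (c t) => x y; apply continuous_fst.
Qed.

Lemma csnd (c : R -> point) t : continuous c t -> continuity_pt (fun t => snd (c t)) t.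
Proof.
move=> H; apply continuity_pt_filterlim.
change (continuous (fun t => snd (c t)) t).
apply: continuous_comp => //. case: (c t) => x y; apply continuous_snd.
Qed.

Lemma cont_aff (p q : R) t : continuous (fun t : R => p + q * t) t.
Proof.
apply continuity_pt_filterlim.
apply continuity_pt_plus. apply continuity_pt_const => ? ? //.
apply continuity_pt_mult. apply continuity_pt_const => ? ? //.
apply continuity_pt_id.
Qed.

Lemma arc_rev c a b I : arc c a b I -> arc (fun t => c (1 - t)) b a I.
Proof.
move=> [Hc [Hi [H0 [H1 HI]]]]; split; [|split; [|split; [|split]]].
- move=> t. apply: (continuous_comp (fun t => 1 - t) c).
  apply: continuous_ext (cont_aff 1 (-1) t) => x. rewrite /=; lra. apply Hc.
- move=> s1 t1 [? ?] [? ?] E.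
  have : 1 - s1 = 1 - t1 by apply: Hi E; rewrite /in01; lra.
  lra.
- by rewrite Rminus_0_r.
- by rewrite Rminus_eq_0.
- move=> t [? ?]; apply HI; unfold in01; lra.
Qed.

Lemma first_hit (al be : R -> point) :
  (forall t, continuous al t) -> (forall t, continuous be t) -> al 1 = be 0 ->
  exists s0 t0, in01 s0 /\ in01 t0 /\ al s0 = be t0 /\
    forall s t, in01 s -> in01 t -> al s = be t -> s0 <= s.
Proof.
move=> Ha Hb E10.
pose S s := in01 s /\ exists t, in01 t /\ al s = be t.
pose E x := S (- x).
have bE : bound E.
  exists 0 => x [[H1 H2] _]; lra.
have eE : exists x, E x.
  exists (-(1)); split; [rewrite /in01; lra|]; exists 0; split; [rewrite /in01; lra|].
  by rewrite Ropp_involutive.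
have [m [Hub Hl]] := completeness E bE eE.
set s0 := - m.
have lbS : forall s, S s -> s0 <= s.
  move=> s Ss; have : E (- s) by rewrite /E Ropp_involutive.
  move/Hub; rewrite /s0; lra.
have m0 : m <= 0 by apply: Hl => x [[? ?] _]; lra.
have m1 : -(1) <= m by apply: Hub; rewrite /E Ropp_involutive; split;
  [rewrite /in01; lra| exists 0; split; [rewrite /in01; lra| done]].
have approx : forall eps, 0 < eps -> exists s, S s /\ s < s0 + eps.
  move=> eps he; apply: NNPP => Hn.
  have : m <= m - eps; last lra.
  apply: Hl => x Ex; apply: Rnot_lt_le => Hx; apply: Hn; exists (- x); split => //.
  rewrite /s0; lra.
have Ss0 : S s0.
  apply: NNPP => Hn.
  have ne : forall t, in01 t -> al s0 <> be t.
    move=> t Ht Ee; apply: Hn; split; [rewrite /in01 /s0; lra|]; by exists t.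
  pose d t := Rabs (fst (al s0) - fst (be t)) + Rabs (snd (al s0) - snd (be t)).
  have cd : forall c, 0 <= c <= 1 -> continuity_pt d c.
    move=> c _.
    have h1 : continuity_pt (fun t => fst (al s0) - fst (be t)) c.
      apply: continuity_pt_minus; [by apply continuity_pt_const => ? ?|exact: cfst].
    have h2 : continuity_pt (fun t => snd (al s0) - snd (be t)) c.
      apply: continuity_pt_minus; [by apply continuity_pt_const => ? ?|exact: csnd].
    exact: (continuity_pt_plus _ _ _ (continuity_pt_comp _ Rabs c h1 (Rcontinuity_abs _))
                                   (continuity_pt_comp _ Rabs c h2 (Rcontinuity_abs _))).
  have [tm [Htm Htm01]] := continuity_ab_min d 0 1 ltac:(lra) cd.
  have dpos : 0 < d tm.
    have h1 := Rabs_pos (fst (al s0) - fst (be tm)).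
    have h2 := Rabs_pos (snd (al s0) - snd (be tm)).
    rewrite /d; apply: Rnot_le_lt => Hle.
    apply: (ne tm Htm01).
    have e1 : Rabs (fst (al s0) - fst (be tm)) = 0 by lra.
    have e2 : Rabs (snd (al s0) - snd (be tm)) = 0 by lra.
    have := Rabs_eq_0 _ e1; have := Rabs_eq_0 _ e2.
    case: (al s0) => x1 y1; case: (be tm) => x2 y2 /= ? ?.
    f_equal; lra.
  have [e1 [he1 H1]] := cfst _ _ (Ha s0) (d tm / 2) ltac:(lra).
  have [e2 [he2 H2]] := csnd _ _ (Ha s0) (d tm / 2) ltac:(lra).
  have [s [[Hs01 [t [Ht01 Est]]] Hs]] := approx (Rmin e1 e2) (Rmin_pos _ _ he1 he2).
  have Hss : s0 <= s by apply: lbS; split => //; exists t.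
  case: (Req_dec s s0) => Hse.
    by apply: (ne t Ht01); rewrite -Hse.
  have hm1 := Rmin_l e1 e2; have hm2 := Rmin_r e1 e2.
  have D1 : R_dist (fst (al s)) (fst (al s0)) < d tm / 2.
    apply: H1; split; [split => //; auto|]. rewrite /dist /= /R_dist Rabs_right; lra.
  have D2 : R_dist (snd (al s)) (snd (al s0)) < d tm / 2.
    apply: H2; split; [split => //; auto|]. rewrite /dist /= /R_dist Rabs_right; lra.
  have Hdt := Htm t Ht01.
  move: Hdt; rewrite /d -Est. move: D1 D2; rewrite /R_dist.
  rewrite (Rabs_minus_sym (fst (al s))) (Rabs_minus_sym (snd (al s))).
  rewrite /d; lra.
case: Ss0 => H01 [t0 [Ht0 E0]].
exists s0, t0; split => //; split => //; split => //.
move=> s t Hs Ht Est; apply: lbS; split => //; by exists t.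
Qed.

Lemma arc_concat al be a b c I1 I2 : arc al a b I1 -> arc be b c I2 -> a <> c ->
  exists ga, arc ga a c (fun p => I1 p \/ I2 p).
Proof.
move=> [Ca [Ia [A0 [A1 IA]]]] [Cb [Ib [B0 [B1 IB]]]] ac.
have [s0 [t0 [[s00 s01] [[t00 t01] [Est Hmin]]]]] :=
  first_hit al be Ca Cb (etrans A1 (esym B0)).
set L := s0 + (1 - t0).
have Lp : 0 < L.
  rewrite /L; apply: Rnot_le_lt => HL. apply: ac.
  have e1 : s0 = 0 by lra. have e2 : t0 = 1 by lra.
  rewrite -A0 -B1; replace R0 with s0 by (rewrite e1; reflexivity); replace R1 with t0 by (rewrite e2; reflexivity); done.
set f := fun t => al (t * L). set g := fun t => be (t0 + t * L - s0).
have cf : forall t, continuous f t.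
  move=> t; apply: (continuous_comp (fun t => t * L) al).
  apply: continuous_ext (cont_aff 0 L t) => x; rewrite /=; lra. apply Ca.
have cg : forall t, continuous g t.
  move=> t; apply: (continuous_comp (fun t => t0 + t * L - s0) be).
  apply: continuous_ext (cont_aff (t0 - s0) L t) => x; rewrite /=; lra. apply Cb.
set a0 := s0 / L.
have a0L : a0 * L = s0 by rewrite /a0; field; lra.
exists (extension_cont f g a0).
have le_iff : forall t, t <= a0 <-> t * L <= s0.
  move=> t; rewrite -a0L; split => H. by apply Rmult_le_compat_r; lra.
  apply: (Rmult_le_reg_r L) => //.
have inA : forall t, in01 t -> t <= a0 -> in01 (t * L).
  move=> t [Ht0 Ht1] /le_iff Hl; split => //; last lra.
  apply: Rmult_le_pos; lra.
have inB : forall t, in01 t -> ~ t <= a0 -> in01 (t0 + t * L - s0) /\ t0 < t0 + t * L - s0.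
  move=> t [Ht0 Ht1] Hn.
  have hs : s0 < t * L by apply: Rnot_le_lt => h; apply: Hn; apply/le_iff.
  have : t * L <= 1 * L by apply: Rmult_le_compat_r; lra.
  have hL : L = s0 + (1 - t0) by []. split; [split|]; lra.
split; [|split; [|split; [|split]]].
- move=> x.
  case: (Rtotal_order x a0) => [Hx|[Hx|Hx]].
  + apply: (continuous_ext_loc _ f).
      have : locally x (fun y => y < a0) by apply: open_lt.
      apply: filter_imp => y Hy; rewrite /extension_cont.
      by case: Rle_dec => // /Rnot_le_lt; lra.
    apply cf.
  + rewrite Hx; apply: extension_cont_continuous => //.
    rewrite /f /g a0L Est; f_equal; rewrite /=; lra.
  + apply: (continuous_ext_loc _ g).
      have : locally x (fun y => a0 < y) by apply: open_gt.
      apply: filter_imp => y Hy; rewrite /extension_cont.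
      by case: Rle_dec => // ?; lra.
    apply cg.
- move=> s t Hs' Ht'; rewrite /extension_cont /f /g.
  case: Rle_dec => Hs; case: Rle_dec => Ht.
  + move=> E; have H : s * L = t * L by apply: Ia E; [apply: inA|apply: inA].
    apply: (Rmult_eq_reg_r L) => //; lra.
  + move=> E; have [Hy1 Hy2] := inB _ Ht' Ht.
    have h := Hmin _ _ (inA _ Hs' Hs) Hy1 E.
    move/le_iff: Hs => Hs.
    have e : s * L = s0 by lra.
    rewrite e Est in E.
    have := Ib t0 _ (conj t00 t01) Hy1 E. move=> ?; lra.
  + move=> E; have [Hy1 Hy2] := inB _ Hs' Hs.
    have h := Hmin _ _ (inA _ Ht' Ht) Hy1 (esym E).
    move/le_iff: Ht => Ht.
    have e : t * L = s0 by lra.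
    rewrite e Est in E.
    have := Ib _ t0 Hy1 (conj t00 t01) E. move=> ?; lra.
  + move=> E; have [Hy1 Hy2] := inB _ Hs' Hs; have [Hz1 Hz2] := inB _ Ht' Ht.
    have := Ib _ _ Hy1 Hz1 E => H.
    apply: (Rmult_eq_reg_r L) => //; lra.
- rewrite /extension_cont /f; case: Rle_dec => H.
    by rewrite Rmult_0_l.
  exfalso; apply: H; rewrite /a0; apply: Rmult_le_pos; first lra.
  apply: Rlt_le; apply: Rinv_0_lt_compat; lra.
- rewrite /extension_cont /f /g; case: Rle_dec => H.
    move/le_iff: H => H.
    have hL : L = s0 + (1 - t0) by [].
    have e2 : R1 * L = s0 by lra.
    rewrite e2 Est -B1; f_equal; lra.
  have hL : L = s0 + (1 - t0) by [].
  rewrite -B1; f_equal; lra.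
- move=> t Ht; rewrite /extension_cont /f /g; case: Rle_dec => H.
    by left; apply: IA; apply: inA.
  by right; apply: IB; case: (inB _ Ht H).
Qed.

Set Implicit Arguments.
Unset Strict Implicit.








Fixpoint pedges (T : finType) (x : T) (s : seq T) : seq {set T} :=
  if s is y :: s' then [set x; y] :: pedges y s' else [::].

Lemma pedges_mem (T : finType) (x : T) s e z : e \in pedges x s -> z \in e -> z \in x :: s.
Proof.
elim: s x => [|y s IH] x //=.
rewrite in_cons => /orP [/eqP -> | He] Hz.
  by move: Hz; rewrite in_set2 !in_cons => /orP [->|->] //; rewrite orbT.
by rewrite in_cons (IH y He Hz) orbT.
Qed.

Lemma pedges_edge (G : sgraph) (x : gV G) s e : path (@gadj G) x s -> e \in pedges x s -> is_edge e.
Proof.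
elim: s x => [|y s IH] x //=.
move=> /andP [Hxy Hp]; rewrite in_cons => /orP [/eqP -> | He]; last exact: IH He.
by apply/existsP; exists x; apply/existsP; exists y; rewrite Hxy eqxx.
Qed.

Lemma size_pedges (T : finType) (x : T) s : size (pedges x s) = size s.
Proof. by elim: s x => [|y s IH] x //=; rewrite IH. Qed.

Definition Img (G : sgraph) (D : drawing G) (x : gV G) (s : seq (gV G)) (p : point) : Prop :=
  exists e, e \in pedges x s /\ exists t, in01 t /\ dcurve D e t = p.

Lemma arc_weak c a b (I J : point -> Prop) : arc c a b I -> (forall p, I p -> J p) -> arc c a b J.
Proof. by move=> [? [? [? [? HI]]]] HIJ; do 4 (split => //); move=> t /HI /HIJ. Qed.

Lemma set2_eq (T : finType) (x y u v : T) : x != y -> [set x; y] = [set u; v] ->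
  (u = x /\ v = y) \/ (u = y /\ v = x).
Proof.
move=> xy E.
have hu : u \in [set x; y] by rewrite E in_set2 eqxx.
have hv : v \in [set x; y] by rewrite E in_set2 eqxx orbT.
have hx : x \in [set u; v] by rewrite -E in_set2 eqxx.
have hy : y \in [set u; v] by rewrite -E in_set2 eqxx orbT.
move: hu hx hy; rewrite !in_set2 => hu hx hy.
case: (eqVneq u x) => [ux|ux].
- left; split => //; subst u.
  move: hy; rewrite eq_sym (negbTE xy) /= => /eqP; done.
- right; move: hu; rewrite (negbTE ux) /= => /eqP uy; split => //.
  move: hx; rewrite uy (negbTE xy) /= => /eqP; done.
Qed.

Lemma edge_arc (G : sgraph) (D : drawing G) (HD : is_drawing D) (x y : gV G) :
  gadj x y -> exists c, arc c (dpos D x) (dpos D y)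
     (fun p => exists t, in01 t /\ dcurve D [set x; y] t = p).
Proof.
move=> Hxy.
have He : is_edge [set x; y].
  by apply/existsP; exists x; apply/existsP; exists y; rewrite Hxy eqxx.
have xy : x != y by apply/negP => /eqP E; subst; by rewrite (girr y) in Hxy.
case: HD => _ [HD _]; have [Hc [Hi [[u [v [E [H0 H1]]]] _]]] := HD _ He.
have Ha : arc (dcurve D [set x; y]) (dpos D u) (dpos D v)
     (fun p => exists t, in01 t /\ dcurve D [set x; y] t = p).
  by do 4 (split => //); move=> t Ht; exists t.
case: (set2_eq xy E) => [[eu ev]|[eu ev]]; rewrite eu ev in Ha.
- by exists (dcurve D [set x; y]).
- by eexists; apply: arc_rev Ha.
Qed.


Lemma path_arc (G : sgraph) (D : drawing G) (HD : is_drawing D) (x y : gV G) p :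
  path (@gadj G) x (rcons p y) -> uniq (x :: rcons p y) ->
  exists c, arc c (dpos D x) (dpos D y) (Img D x (rcons p y)).
Proof.
elim: p x => [|z p IH] x /=.
  move=> /andP [Hxy _] _; have [c Hc] := edge_arc HD Hxy.
  exists c; eapply arc_weak; [exact Hc|]. move=> q [t Ht]; exists [set x; y]; split.
    by rewrite mem_head.
  by exists t.
move=> /andP [Hxz Hp] /andP [Hx Hu].
have [c2 H2] := IH z Hp Hu.
have [c1 H1] := edge_arc HD Hxz.
have xy : dpos D x <> dpos D y.
  move=> E; have := (proj1 HD) _ _ E => exy; move: Hx; rewrite exy.
  by rewrite in_cons mem_rcons in_cons eqxx /= orbT.
have [c Hc] := arc_concat _ _ _ _ _ _ _ H1 H2 xy.
exists c; eapply arc_weak; first exact Hc. move=> q [[t Ht]|[e [He Ht]]].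
  by exists [set x; z]; split; [rewrite mem_head| exists t].
by exists e; split => //; rewrite in_cons He orbT.
Qed.

Lemma fchoice (A B : Type) (Rl : A -> B -> Prop) :
  (forall a, exists b, Rl a b) -> exists f, forall a, Rl a (f a).
Proof.
move=> H; exists (fun a => proj1_sig (constructive_indefinite_description _ (H a))).
by move=> a; case: (constructive_indefinite_description _ (H a)).
Qed.

Definition spec (H G : sgraph) (D : drawing G) (phi : gV H -> gV G)
  (P : {set gV H} -> seq (gV G)) (r : nat) (A : {set gV H}) (u v : gV H) (c : R -> point) : Prop :=
  A = [set u; v] /\ path (@gadj G) (phi u) (rcons (P A) (phi v)) /\ uniq (P A) /\
  (size (P A) <= 2 * r)%N /\ (forall x, x \in P A -> forall y, x != phi y) /\
  arc c (dpos D (phi u)) (dpos D (phi v)) (Img D (phi u) (rcons (P A) (phi v))).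

Lemma vs_cases (H G : sgraph) (phi : gV H -> gV G) (u v : gV H) s z :
  z \in phi u :: rcons s (phi v) -> (exists w, z = phi w /\ w \in [set u; v]) \/ z \in s.
Proof.
rewrite in_cons mem_rcons in_cons => /orP [/eqP->|/orP [/eqP->|->]].
- by left; exists u; rewrite in_set2 eqxx.
- by left; exists v; rewrite in_set2 eqxx orbT.
- by right.
Qed.

Lemma common (H G : sgraph) (D : drawing G) (phi : gV H -> gV G) P r
  (Hinj : injective phi)
  (Hdisj : forall A A' : {set gV H}, is_edge A -> is_edge A' -> A <> A' ->
       forall x, x \in P A -> x \notin P A')
  A1 A2 u1 v1 c1 u2 v2 c2 z :
  is_edge A1 -> is_edge A2 -> A1 <> A2 ->
  spec D phi P r A1 u1 v1 c1 -> spec D phi P r A2 u2 v2 c2 ->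
  z \in phi u1 :: rcons (P A1) (phi v1) -> z \in phi u2 :: rcons (P A2) (phi v2) ->
  exists w, z = phi w /\ w \in A1 /\ w \in A2.
Proof.
move=> H1 H2 n12 [E1 [_ [_ [_ [I1 _]]]]] [E2 [_ [_ [_ [I2 _]]]]].
move=> /vs_cases [[w1 [z1 m1]]|z1] /vs_cases [[w2 [z2 m2]]|z2].
- exists w1; split => //; rewrite E1 E2; split => //.
  by have := Hinj _ _ (etrans (esym z1) z2) => ->.
- by have := I2 _ z2 w1; rewrite z1 eqxx.
- by have := I1 _ z1 w2; rewrite z2 eqxx.
- by have := Hdisj _ _ H1 H2 n12 _ z1; rewrite z2.
Qed.

Lemma set2_sub (T : finType) (u v w1 w2 : T) : w1 \in [set u; v] -> w2 \in [set u; v] ->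
  w1 != w2 -> [set u; v] = [set w1; w2].
Proof.
move=> h1 h2 n; apply/eqP; rewrite eq_sym eqEcard; apply/andP; split.
  by apply/subsetP => x; rewrite in_set2 => /orP [/eqP->|/eqP->].
by rewrite !cards2 n; case: (u != v).
Qed.

Lemma distinct_edges (H G : sgraph) (D : drawing G) (phi : gV H -> gV G) P r
  (Hinj : injective phi)
  (Hdisj : forall A A' : {set gV H}, is_edge A -> is_edge A' -> A <> A' ->
       forall x, x \in P A -> x \notin P A')
  A1 A2 u1 v1 c1 u2 v2 c2 g :
  is_edge A1 -> is_edge A2 -> A1 <> A2 ->
  spec D phi P r A1 u1 v1 c1 -> spec D phi P r A2 u2 v2 c2 ->
  g \in pedges (phi u1) (rcons (P A1) (phi v1)) -> g \in pedges (phi u2) (rcons (P A2) (phi v2)) ->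
  False.
Proof.
move=> H1 H2 n12 S1 S2 g1 g2.
have /existsP [a /existsP [b /andP [ab /eqP Eg]]] := pedges_edge (proj1 (proj2 S1)) g1.
have ma : a \in g by rewrite Eg in_set2 eqxx.
have mb : b \in g by rewrite Eg in_set2 eqxx orbT.
have [wa [ea [a1 a2]]] := common Hinj Hdisj H1 H2 n12 S1 S2 (pedges_mem g1 ma) (pedges_mem g2 ma).
have [wb [eb [b1 b2]]] := common Hinj Hdisj H1 H2 n12 S1 S2 (pedges_mem g1 mb) (pedges_mem g2 mb).
have nab : wa != wb.
  by apply/negP => /eqP e; move: ab; rewrite ea eb e girr.
apply: n12; case: S1 => E1 _; case: S2 => E2 _.
rewrite E1 in a1 b1 *; rewrite E2 in a2 b2 *.
by rewrite (set2_sub a1 b1 nab) (set2_sub a2 b2 nab).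
Qed.

Lemma vert_edge (H G : sgraph) (D : drawing G) (HD : is_drawing D) (phi : gV H -> gV G) P r
  A u v c t z : spec D phi P r A u v c -> in01 t -> c t = dpos D z ->
  z \in phi u :: rcons (P A) (phi v).
Proof.
move=> [_ [Hp [_ [_ [_ [_ [_ [_ [_ HI]]]]]]]]] Ht E.
have [e [He [s [Hs Es]]]] := HI t Ht.
have Hed := pedges_edge Hp He.
have [_ [_ [_ Hv]]] := proj1 (proj2 HD) e Hed.
apply: (pedges_mem He); apply: (Hv s) => //; by rewrite Es E.
Qed.

Lemma interior_vertex (H G : sgraph) (D : drawing G) (HD : is_drawing D) (phi : gV H -> gV G) P r
  A u v c t z : spec D phi P r A u v c -> in01o t -> c t = dpos D z -> z \in P A.
Proof.
move=> S [t0 t1] E.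
have Ht : in01 t by split; lra.
case/vs_cases: (vert_edge HD S Ht E) => // [[w [ew]]].
case: S => _ [_ [_ [_ [_ [_ [Ii [c0 [c1 _]]]]]]]].
rewrite in_set2 => /orP [/eqP ew'|/eqP ew']; subst w.
- have := Ii t R0 Ht ltac:(split; lra); rewrite c0 E ew => h; have := h erefl; lra.
- have := Ii t R1 Ht ltac:(split; lra); rewrite c1 E ew => h; have := h erefl; lra.
Qed.

Lemma pt_open (H G : sgraph) (D : drawing G) (HD : is_drawing D) (phi : gV H -> gV G) P r
  A u v c t : spec D phi P r A u v c -> in01o t ->
  (exists e s, e \in pedges (phi u) (rcons (P A) (phi v)) /\ in01o s /\ dcurve D e s = c t) \/
  (exists z, z \in P A /\ c t = dpos D z).
Proof.
move=> S Ht.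
have S' := S; case: S' => _ [Hp [_ [_ [_ [_ [_ [_ [_ HI]]]]]]]].
have [e [He [s [[s0 s1] Es]]]] := HI t ltac:(case: Ht => ? ?; split; lra).
have Hed := pedges_edge Hp He.
have [_ [_ [[a [b [_ [ea eb]]]] _]]] := proj1 (proj2 HD) e Hed.
case: (Req_dec s R0) => [e0|n0].
  right; exists a; split; last by rewrite -Es e0 ea.
  have Ea : c t = dpos D a by rewrite -Es e0 ea.
  exact: (interior_vertex HD S Ht Ea).
case: (Req_dec s R1) => [e1|n1].
  right; exists b; split; last by rewrite -Es e1 eb.
  have Eb : c t = dpos D b by rewrite -Es e1 eb.
  exact: (interior_vertex HD S Ht Eb).
left; exists e, s; split => //; split => //; split; lra.
Qed.

Lemma disjP (T : finType) (A B : {set T}) :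
  reflect (forall x, x \in A -> x \in B -> False) [disjoint A & B].
Proof.
apply: (iffP pred0P) => [h x xa xb| h x]; first by have := h x; rewrite /= xa xb.
by apply/negbTE/negP => /andP [xa xb]; exact: h x xa xb.
Qed.

Lemma disjE (T : finType) (A B : {set T}) x :
  [disjoint A & B] -> x \in A -> x \in B -> False.
Proof. by move/disjP; apply. Qed.

Lemma edge_neq (H : sgraph) (A : {set gV H}) u v : is_edge A -> A = [set u; v] -> u != v.
Proof.
move=> /existsP [a /existsP [b /andP [ab /eqP Eab]]] E.
apply/negP => /eqP uv; subst v.
have : a \in [set u; u] by rewrite -E Eab in_set2 eqxx.
have : b \in [set u; u] by rewrite -E Eab in_set2 eqxx orbT.
rewrite !in_set2 !orbb => /eqP eb /eqP ea; subst.
by rewrite girr in ab.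
Qed.

Lemma fold_card (T : finType) (CG : {set T} -> {set T}) (k : nat) (l : seq {set T}) :
  (forall g, g \in l -> #|CG g| <= k)%N ->
  (#|foldr (fun g S => CG g :|: S) set0 l| <= size l * k)%N.
Proof.
elim: l => [|g l IH] H /=; first by rewrite cards0.
apply: leq_trans (leq_card_setU _ _).1 _.
rewrite mulSn leq_add //; first by apply: H; rewrite mem_head.
by apply: IH => g' h; apply: H; rewrite in_cons h orbT.
Qed.

Lemma fold_mem (T : finType) (CG : {set T} -> {set T}) (l : seq {set T}) g x :
  g \in l -> x \in CG g -> x \in foldr (fun g S => CG g :|: S) set0 l.
Proof.
elim: l => [|g' l IH] //=; rewrite in_cons in_setU => /orP [/eqP <- -> //| h hx].
by rewrite IH ?orbT.
Qed.

Unset Implicit Arguments.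
Close Scope R_scope.

Theorem corollary11 (k r : nat) (G H : sgraph) :
  gap_cover_planar k G -> shallow_top_minor r H G ->
  gap_cover_planar ((2 * r + 1) * k) H.
Proof.
move=> [D [HD [BG [[HB1 HB2] HBC]]]] [phi [P [Hinj [Hpath Hdisj]]]].
have Hex : forall A, exists o : option (gV H * gV H * (R -> point)), is_edge A ->
    match o with Some (u, v, c) => spec D phi P r A u v c | None => False end.
  move=> A; case: (classic (is_edge A)) => HA; last by exists None.
  have [u [v [EA [Hp [Hu [Hs Hi]]]]]] := Hpath A HA.
  have uv := edge_neq HA EA.
  have Hun : uniq (phi u :: rcons (P A) (phi v)).
    rewrite /= rcons_uniq mem_rcons in_cons Hu.
    have nu : phi u \notin P A by apply/negP => /Hi /(_ u); rewrite eqxx.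
    have nv : phi v \notin P A by apply/negP => /Hi /(_ v); rewrite eqxx.
    by rewrite (inj_eq Hinj) (negbTE uv) (negbTE nu) nv.
  have [c Hc] := path_arc HD Hp Hun.
  by exists (Some (u, v, c)) => _; do 5 (split => //).
have [sel Hsel] := fchoice Hex.
pose crv A := if sel A is Some (_, _, c) then c else fun _ : R => (R0, R0).
pose es A := if sel A is Some (u, v, _) then pedges (phi u) (rcons (P A) (phi v)) else [::].
have Hspec : forall A, is_edge A -> exists u v, spec D phi P r A u v (crv A) /\
    es A = pedges (phi u) (rcons (P A) (phi v)).
  move=> A HA; have := Hsel A HA; rewrite /crv /es.
  by case: (sel A) => [[[u v] c]|] // Hs; exists u, v.
pose DH := @Drawing H (fun x => dpos D (phi x)) crv.
have key : forall A A' u v u' v' t t', is_edge A -> is_edge A' -> A <> A' ->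
    spec D phi P r A u v (crv A) -> spec D phi P r A' u' v' (crv A') ->
    in01o t -> in01o t' -> crv A t = crv A' t' ->
    exists e s, e \in pedges (phi u) (rcons (P A) (phi v)) /\ in01o s /\ dcurve D e s = crv A t.
  move=> A A' u v u' v' t t' HA HA' nA S S' Ht Ht' E.
  case: (pt_open HD S Ht) => // [[z [hz Ez]]].
  have Ez' : crv A' t' = dpos D z by rewrite -E.
  have := interior_vertex HD S' Ht' Ez'.
  by rewrite (negbTE (Hdisj _ _ HA HA' nA _ hz)).
exists DH; split.
  split.
    move=> a b E; apply: Hinj; exact: (proj1 HD _ _ E).
  split.
    move=> A HA; have [u [v [S _]]] := Hspec A HA.
    have S' := S; case: S' => EA [_ [_ [_ [Hi [Cc [Ic [c0 [c1 _]]]]]]]].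
    split; first exact Cc. split; first exact Ic. split.
      by exists u, v.
    move=> t x Ht E.
    case/vs_cases: (vert_edge HD S Ht E) => [[w [ew mw]]|hx].
      by rewrite EA (Hinj _ _ ew).
    by have := Hi _ hx x; rewrite eqxx.
  move=> A1 A2 A3 p H1 H2 H3 n12 n13 n23 [t1 [T1 E1]] [t2 [T2 E2]] [t3 [T3 E3]].
  have [u1 [v1 [S1 _]]] := Hspec A1 H1.
  have [u2 [v2 [S2 _]]] := Hspec A2 H2.
  have [u3 [v3 [S3 _]]] := Hspec A3 H3.
  have [e1 [s1 [m1 [O1 F1]]]] := key _ _ _ _ _ _ _ _ H1 H2 n12 S1 S2 T1 T2 (etrans E1 (esym E2)).
  have [e2 [s2 [m2 [O2 F2]]]] := key _ _ _ _ _ _ _ _ H2 H1 (nesym n12) S2 S1 T2 T1 (etrans E2 (esym E1)).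
  have [e3 [s3 [m3 [O3 F3]]]] := key _ _ _ _ _ _ _ _ H3 H1 (nesym n13) S3 S1 T3 T1 (etrans E3 (esym E1)).
  have d12 : e1 <> e2 by move=> e; subst e2; exact: (distinct_edges Hinj Hdisj H1 H2 n12 S1 S2 m1 m2).
  have d13 : e1 <> e3 by move=> e; subst e3; exact: (distinct_edges Hinj Hdisj H1 H3 n13 S1 S3 m1 m3).
  have d23 : e2 <> e3 by move=> e; subst e3; exact: (distinct_edges Hinj Hdisj H2 H3 n23 S2 S3 m2 m3).
  apply: (proj2 (proj2 HD) e1 e2 e3 p _ _ _ d12 d13 d23).
  - exact: (pedges_edge (proj1 (proj2 S1)) m1).
  - exact: (pedges_edge (proj1 (proj2 S2)) m2).
  - exact: (pedges_edge (proj1 (proj2 S3)) m3).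
  - by exists s1; split => //; rewrite F1.
  - by exists s2; split => //; rewrite F2.
  - by exists s3; split => //; rewrite F3.
have HCG0 : forall g, exists C : {set gV G}, is_edge g ->
    (#|C| <= k)%N /\ [disjoint C & g] /\ forall f, BG g f -> exists x, x \in f /\ x \in C.
  move=> g; case: (classic (is_edge g)) => h.
    by have [C HC] := HBC g h; exists C.
  by exists set0.
have [CG HCG] := fchoice HCG0.
pose BH e f := crossing DH e f /\ exists ge gf, ge \in es e /\ gf \in es f /\ BG ge gf.
have discr : forall e f, is_edge e -> is_edge f -> [disjoint e & f] ->
    forall ge gf, ge \in es e -> gf \in es f -> [disjoint ge & gf].
  move=> e f He Hf Hd ge gf mge mgf.
  have [ue [ve [Se Ee]]] := Hspec e He.
  have [uf [vf [Sf Ef]]] := Hspec f Hf.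
  rewrite Ee in mge; rewrite Ef in mgf.
  have nef : e <> f.
    move=> ef; subst f; case: Se => EA _.
    by apply: (disjE (x := ue) Hd); rewrite EA in_set2 eqxx.
  apply/disjP => z z1 z2.
  have [w [_ [w1 w2]]] := common Hinj Hdisj He Hf nef Se Sf (pedges_mem mge z1) (pedges_mem mgf z2).
  exact: disjE Hd w1 w2.
exists BH; split.
  split; first by move=> e f [].
  move=> e f Hc; have Hc' := Hc; case: Hc' => He [Hf [Hd [s [t [Hs [Ht E]]]]]].
  have [ue [ve [Se Ee]]] := Hspec e He.
  have [uf [vf [Sf Ef]]] := Hspec f Hf.
  case: Se => _ [Hpe [_ [_ [_ [_ [_ [_ [_ HIe]]]]]]]].
  case: Sf => _ [Hpf [_ [_ [_ [_ [_ [_ [_ HIf]]]]]]]].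
  have [ge [mge [s' [Hs' Es']]]] := HIe s Hs.
  have [gf [mgf [t' [Ht' Et']]]] := HIf t Ht.
  rewrite -Ee in mge; rewrite -Ef in mgf.
  have Hge : is_edge ge by rewrite Ee in mge; exact: pedges_edge Hpe mge.
  have Hgf : is_edge gf by rewrite Ef in mgf; exact: pedges_edge Hpf mgf.
  have cr : crossing D ge gf.
    split => //; split => //; split; first exact: discr Hd _ _ mge mgf.
    exists s', t'; do 2 (split => //).
    rewrite Es' Et'; exact: E.
  case: (HB2 _ _ cr) => hb; [left|right]; split => //.
  - by exists ge, gf.
  - split => //; split => //; split; first by rewrite disjoint_sym.
    by exists t, s; do 2 (split => //).
  - by exists gf, ge.
move=> e HA.
have [u [v [Se Ee]]] := Hspec e HA.
have Hpsi0 : forall x, exists y : gV H,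
    (forall w, phi w = x -> y = w) /\ (forall A, is_edge A -> x \in P A -> y \in A).
  move=> x.
  case: (classic (exists w, phi w = x)) => [[w ew]|nw].
    exists w; split; first by move=> w' e'; apply: Hinj; rewrite ew e'.
    move=> A HA' hx; have [uA [vA [[_ [_ [_ [_ [Hi _]]]]] _]]] := Hspec A HA'.
    by have := Hi _ hx w; rewrite ew eqxx.
  case: (classic (exists A, is_edge A /\ x \in P A)) => [[A [HA' hx]]|nA].
    have [uA [vA [[EA _] _]]] := Hspec A HA'.
    exists uA; split; first by move=> w ew; exfalso; apply: nw; exists w.
    move=> A' HA'' hx'; case: (classic (A = A')) => [<-|nAA].
      by rewrite EA in_set2 eqxx.
    by have := Hdisj _ _ HA' HA'' nAA _ hx; rewrite hx'.
  exists u; split; first by move=> w ew; exfalso; apply: nw; exists w.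
  by move=> A HA' hx; exfalso; apply: nA; exists A.
have [psi Hpsi] := fchoice Hpsi0.
pose U := foldr (fun g S => CG g :|: S) set0 (es e).
have Hp := proj1 (proj2 Se).
exists ((psi @: U) :\: e); split; [|split].
- apply: leq_trans (subset_leq_card (subsetDl _ _)) _.
  apply: leq_trans (leq_imset_card _ _) _.
  apply: leq_trans (fold_card (k := k) _) _.
    move=> g mg; rewrite Ee in mg.
    by case: (HCG g (pedges_edge Hp mg)).
  rewrite Ee size_pedges size_rcons; apply: leq_mul => //.
  by rewrite addn1 ltnS; case: Se => _ [_ [_ [h _]]].
- apply/disjP => x; rewrite in_setD => /andP [/negP h _] hx; exact: h hx.
- move=> f [Hc [ge [gf [mge [mgf hb]]]]].
  have Hge : is_edge ge by rewrite Ee in mge; exact: pedges_edge Hp mge.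
  have [_ [_ Hcov]] := HCG ge Hge.
  have [x [xf xC]] := Hcov gf hb.
  case: Hc => _ [Hf [Hd _]].
  have [uf [vf [Sf Ef]]] := Hspec f Hf.
  rewrite Ef in mgf.
  have pf : psi x \in f.
    case/vs_cases: (pedges_mem mgf xf) => [[w [ew mw]]|hx].
      by rewrite ((Hpsi x).1 w (esym ew)); case: Sf => -> _.
    exact: (Hpsi x).2 f Hf hx.
  exists (psi x); split => //.
  rewrite in_setD; apply/andP; split.
    by apply/negP => h; exact: disjE Hd h pf.
  by apply: imset_f; exact: fold_mem mge xC.
Qed.

Print Assumptions corollary11.
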